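(* Let $T_i$, $T_j$ be complete countable first-order theories and $\lambda$ an infinite cardinal. If $\neg(T_j \trianglelefteq_\lambda T_i)$ in Keisler's order, then $\neg(T_j \trianglelefteq^*_{\lambda^+,\aleph_1} T_i)$, and consequently $\neg(T_j \trianglelefteq^*_{\lambda^+,1} T_i)$.
   Context: An interpretation of a complete theory $T_0$ in a complete theory $T_*$ is a family $\bar\varphi=\langle \varphi_R : R$ a relation or function symbol of $\tau(T_0)$, or $=\rangle$ of $\tau(T_* )$-formulas such that for every $M_*\models T_*$ the $\tau(T_0)$-structure $M_*^{[\bar\varphi]}$ with domain $\{a : M_*\models\varphi_=(a,a)\}$, relations $R^{N}=\{\bar a : M_*\models \varphi_R[\bar a]\}$ and functions whose graphs are defined by the $\varphi_f$ (which are required to define functions), is a model of $T_0$. For $\kappa$ equal to $1$ or an infinite cardinal (''$1$-saturated'' means: an arbitrary model) and a cardinal $\lambda$, $T_0 \trianglelefteq^*_{\lambda,\kappa} T_1$ means: there is a complete theory $T_*$ with $|T_*|\le |T_0|+|T_1|$ interpreting $T_0$ via some $\bar\varphi_0$ and $T_1$ via some $\bar\varphi_1$ (in disjoint signatures) such that for every $\kappa$-saturated $M_*\models T_*$, if $M_*^{[\bar\varphi_1]}$ is $\lambda$-saturated then $M_*^{[\bar\varphi_0]}$ is $\lambda$-saturated. Keisler's order: $T_0\trianglelefteq_\lambda T_1$ means that for every regular ultrafilter $\mathcal D$ on $\lambda$, every $M_0\models T_0$ and every $M_1\models T_1$, if $M_1^\lambda/\mathcal D$ is $\lambda^+$-saturated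 then $M_0^\lambda/\mathcal D$ is $\lambda^+$-saturated. *)

(* Defs.v *)
From mathcomp Require Import all_boot.
Set Implicit Arguments.
Unset Strict Implicit.
Unset Printing Implicit Defensive.

Fixpoint lIn (T : Type) (x : T) (s : seq T) : Prop :=
  match s with [::] => False | y :: s' => y = x \/ lIn x s' end.

Record sig := Sig {
  fsym : Type; rsym : Type;
  farity : fsym -> nat; rarity : rsym -> nat }.

(* A signature is countable (so |T| = |tau(T)| + aleph_0 = aleph_0). *)
Definition countable_sig (S : sig) : Prop :=
  (exists e : fsym S -> nat, injective e) /\ (exists e : rsym S -> nat, injective e).

(* ---------- syntax (de Bruijn variables, Ex binds variable 0) ---------- *)
Inductive term (S : sig) : Type :=
| Var : nat -> term S
| App : forall f : fsym S, ('I_(farity f) -> term S) -> term S.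

Inductive formula (S : sig) : Type :=
| Eq  : term S -> term S -> formula S
| Rel : forall r : rsym S, ('I_(rarity r) -> term S) -> formula S
| Neg : formula S -> formula S
| And : formula S -> formula S -> formula S
| Ex  : formula S -> formula S.

Arguments Var {S}.

Fixpoint tbounded (S : sig) (k : nat) (t : term S) : Prop :=
  match t with
  | Var n => n < k
  | App f args => forall i, tbounded k (args i)
  end.

Fixpoint bounded (S : sig) (k : nat) (phi : formula S) : Prop :=
  match phi with
  | Eq t u => tbounded k t /\ tbounded k u
  | Rel r args => forall i, tbounded k (args i)
  | Neg p => bounded k p
  | And p q => bounded k p /\ bounded k q
  | Ex p => bounded k.+1 p
  end.

Definition sentence (S : sig) (phi : formula S) : Prop := bounded 0 phi.

(* ---------- structures (nonempty, equality is genuine equality) ---------- *)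
Record structure (S : sig) := Structure {
  carrier :> Type;
  carrier_inh : inhabited carrier;
  funs : forall f : fsym S, ('I_(farity f) -> carrier) -> carrier;
  rels : forall r : rsym S, ('I_(rarity r) -> carrier) -> Prop }.
Arguments funs {S} s f _.
Arguments rels {S} s r _.
Arguments carrier {S} s.

Definition scons (T : Type) (b : T) (e : nat -> T) : nat -> T :=
  fun n => match n with 0 => b | m.+1 => e m end.

Fixpoint eval (S : sig) (M : structure S) (e : nat -> M) (t : term S) : M :=
  match t with
  | Var n => e n
  | App f args => funs M f (fun i => eval e (args i))
  end.

Arguments eval {S} M e t.

Fixpoint holds (S : sig) (M : structure S) (e : nat -> M) (phi : formula S) : Prop :=
  match phi with
  | Eq t u => @eval _ M e t = @eval _ M e u
  | Rel r args => rels M r (fun i => @eval _ M e (args i))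
  | Neg p => ~ holds e p
  | And p q => holds e p /\ holds e q
  | Ex p => exists b : M, holds (scons b e) p
  end.
Arguments holds {S} M e phi.


Record theory := Theory { tsig : sig; tax : formula tsig -> Prop }.
Arguments tax t _ : clear implicits.

Definition models (S : sig) (M : structure S) (T : formula S -> Prop) : Prop :=
  forall phi, T phi -> forall e : nat -> M, holds M e phi.

Definition entails (S : sig) (T : formula S -> Prop) (phi : formula S) : Prop :=
  forall M : structure S, models M T -> forall e : nat -> M, holds M e phi.

Definition complete_theory (S : sig) (T : formula S -> Prop) : Prop :=
  (forall phi, T phi -> sentence phi) /\
  (exists M : structure S, models M T) /\
  (forall phi, sentence phi -> entails T phi \/ entails T (Neg phi)).

(* A formula phi(x0; x1..xk) together with parameters a : 'I_k -> M. *)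
Definition entry (S : sig) (M : structure S) :=
  { k : nat & (formula S * ('I_k -> M))%type }.

Definition penv (S : sig) (M : structure S) (k : nat) (b : M) (a : 'I_k -> M)
  : nat -> M :=
  fun n => match n with
           | 0 => b
           | m.+1 => match (insub m : option 'I_k) with Some i => a i | None => b end
           end.

Definition holds_entry (S : sig) (M : structure S) (b : M) (x : entry M) : Prop :=
  holds M (penv b (projT2 x).2) (projT2 x).1.

Definition type_over (S : sig) (M : structure S) (A : M -> Prop) (p : entry M -> Prop) :=
  forall x, p x -> bounded (projT1 x).+1 (projT2 x).1 /\ forall i, A ((projT2 x).2 i).

Definition fin_sat (S : sig) (M : structure S) (p : entry M -> Prop) : Prop :=
  forall s : seq (entry M), (forall x, lIn x s -> p x) ->
    exists b : M, forall x, lIn x s -> holds_entry b x.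

Definition realized (S : sig) (M : structure S) (p : entry M -> Prop) : Prop :=
  exists b : M, forall x, p x -> holds_entry b x.

Definition saturated (small : Type -> Prop) (S : sig) (M : structure S) : Prop :=
  forall (A : M -> Prop), small {x : M | A x} ->
  forall p : entry M -> Prop, type_over A p -> fin_sat p -> realized p.

(* |X| <= |L| : saturated (card_le L) M  means  M is |L|^+-saturated *)
Definition card_le (L : Type) (X : Type) : Prop := exists f : X -> L, injective f.
(* aleph_1-saturated = aleph_0^+-saturated *)
Definition aleph1_small (X : Type) : Prop := card_le nat X.
(* "1-saturated" = arbitrary model: no type is required to be realized *)
Definition one_small (X : Type) : Prop := False.

Definition infinite_type (L : Type) : Prop :=
  ~ exists s : seq L, forall x : L, lIn x s.

Definition ultrafilter (L : Type) (D : (L -> Prop) -> Prop) : Prop :=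
  D (fun _ => True) /\ ~ D (fun _ => False) /\
  (forall X Y, D X -> (forall t, X t -> Y t) -> D Y) /\
  (forall X Y, D X -> D Y -> D (fun t => X t /\ Y t)) /\
  (forall X, D X \/ D (fun t => ~ X t)).

Definition regular_ultrafilter (L : Type) (D : (L -> Prop) -> Prop) : Prop :=
  ultrafilter D /\
  exists X : L -> (L -> Prop), (forall i, D (X i)) /\
    forall t, exists s : seq L, forall i, X i t -> lIn i s.

Definition is_ultrapower (L : Type) (D : (L -> Prop) -> Prop) (S : sig)
  (M : structure S) (U : structure S) : Prop :=
  exists pi : (L -> M) -> U,
    (forall u : U, exists f, pi f = u) /\
    (forall f g, pi f = pi g <-> D (fun t => f t = g t)) /\
    (forall r (a : 'I_(rarity r) -> L -> M),
        rels U r (fun i => pi (a i)) <-> D (fun t => rels M r (fun i => a i t))) /\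
    (forall f (a : 'I_(farity f) -> L -> M),
        funs U f (fun i => pi (a i)) = pi (fun t => funs M f (fun i => a i t))).

(* Keisler's order  T0 <|_lambda T1,  lambda = |L| *)
Definition keisler_le (L : Type) (T0 T1 : theory) : Prop :=
  forall D : (L -> Prop) -> Prop, regular_ultrafilter D ->
  forall (M0 : structure (tsig T0)) (M1 : structure (tsig T1)),
    models M0 (tax T0) -> models M1 (tax T1) ->
  forall (U0 : structure (tsig T0)) (U1 : structure (tsig T1)),
    is_ultrapower D M0 U0 -> is_ultrapower D M1 U1 ->
    saturated (card_le L) U1 -> saturated (card_le L) U0.

Record interpretation (S0 S : sig) := Interp {
  i_eq  : formula S;
  i_rel : forall r : rsym S0, formula S;
  i_fun : forall f : fsym S0, formula S }.  (* graph phi_f(x0..x_{n-1}, x_n) *)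
Arguments i_eq {S0 S} i.
Arguments i_rel {S0 S} i r.
Arguments i_fun {S0 S} i f.

Definition holdsT (S : sig) (M : structure S) (phi : formula S) (n : nat)
  (a : 'I_n -> M) : Prop :=
  forall e : nat -> M, (forall i : 'I_n, e i = a i) -> holds M e phi.
Arguments holdsT {S} M phi {n} a.

Definition holds2 (S : sig) (M : structure S) (phi : formula S) (x y : M) : Prop :=
  forall e : nat -> M, e 0 = x -> e 1 = y -> holds M e phi.
Arguments holds2 {S} M phi x y.

Definition holdsG (S : sig) (M : structure S) (phi : formula S) (n : nat)
  (a : 'I_n -> M) (b : M) : Prop :=
  forall e : nat -> M, (forall i : 'I_n, e i = a i) -> e n = b -> holds M e phi.
Arguments holdsG {S} M phi {n} a b.

(* N is (isomorphic to) M^[I]: the quotient of {a | phi_=(a,a)} by phi_=,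
   with relations and function graphs given by the phi_R, phi_f;
   h picks representatives. *)
Definition is_interp (S0 S : sig) (I : interpretation S0 S)
  (M : structure S) (N : structure S0) : Prop :=
  exists h : N -> M,
    (forall a b : N, a = b <-> holds2 M (i_eq I) (h a) (h b)) /\
    (forall m : M, holds2 M (i_eq I) m m -> exists a : N, holds2 M (i_eq I) (h a) m) /\
    (forall r (a : 'I_(rarity r) -> N), rels N r a <-> holdsT M (i_rel I r) (fun i => h (a i))) /\
    (forall f (a : 'I_(farity f) -> N) (b : N),
        funs N f a = b <-> holdsG M (i_fun I f) (fun i => h (a i)) (h b)).

Definition interprets (T0 : theory) (S : sig) (T : formula S -> Prop)
  (I : interpretation (tsig T0) S) : Prop :=
  bounded 2 (i_eq I) /\
  (forall r, bounded (rarity r) (i_rel I r)) /\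
  (forall f, bounded (farity f).+1 (i_fun I f)) /\
  forall M : structure S, models M T ->
    exists N : structure (tsig T0), is_interp I M N /\ models N (tax T0).

Arguments interprets T0 {S} T I.

(* |T*| <= |T0| + |T1|, where |T| = |tau(T)| + aleph_0 *)
Definition sig_size_le (S S0 S1 : sig) : Prop :=
  exists f : (fsym S + rsym S) ->
             (fsym S0 + rsym S0 + (fsym S1 + rsym S1) + nat)%type, injective f.

(* T0 <|*_{lambda,kappa} T1, where lambda-saturation and kappa-saturation are
   given by the smallness predicates lam_small, kap_small *)
Definition kstar_le (lam_small kap_small : Type -> Prop) (T0 T1 : theory) : Prop :=
  exists (S : sig) (T : formula S -> Prop)
         (I0 : interpretation (tsig T0) S) (I1 : interpretation (tsig T1) S),
    complete_theory T /\ sig_size_le S (tsig T0) (tsig T1) /\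
    interprets T0 T I0 /\ interprets T1 T I1 /\
    forall M : structure S, models M T -> saturated kap_small M ->
    forall (N0 : structure (tsig T0)) (N1 : structure (tsig T1)),
      is_interp I0 M N0 -> is_interp I1 M N1 ->
      saturated lam_small N1 -> saturated lam_small N0.

(* Main.v *)
Require Import Defs.
From mathcomp Require Import all_boot.
From Stdlib Require Import ClassicalEpsilon FunctionalExtensionality PropExtensionality ProofIrrelevance Classical.
Set Implicit Arguments.
Unset Strict Implicit.
Unset Printing Implicit Defensive.

Definition pb (P : Prop) : bool := if excluded_middle_informative P then true else false.
Lemma pbP P : pb P = true <-> P.
Proof. rewrite /pb; case: excluded_middle_informative => //. Qed.

Lemma lIn_mem (T : eqType) (x : T) s : lIn x s <-> x \in s.
Proof.
elim: s => [|y s IH] /=; first by split.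
rewrite in_cons; split.
- by case=> [->|/IH ->]; rewrite ?eqxx ?orbT.
- by case/orP=> [/eqP->|/IH]; [left|right].
Qed.

Lemma lIn_map (A B : Type) (f : A -> B) y s : lIn y (map f s) <-> exists x, lIn x s /\ y = f x.
Proof.
elim: s => [|x s IH] /=; first by split=> // [[x []]].
split.
- case=> [<-|h]; first by exists x; split; [left|].
  case: (proj1 IH h) => z [h1 h2]; by exists z; split; [right|].
- case=> z [[<-|h] e]; [by left; rewrite e| right; apply IH; exists z; by split].
Qed.

Lemma lIn_cat (A : Type) (x : A) s1 s2 : lIn x (s1 ++ s2) <-> lIn x s1 \/ lIn x s2.
Proof. elim: s1 => [|y s IH] /=; [tauto| rewrite IH; tauto]. Qed.

Lemma lIn_filter (A : Type) (p : pred A) x s : lIn x (filter p s) <-> lIn x s /\ p x.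
Proof.
elim: s => [|y s IH] /=; first tauto.
case py: (p y) => /=; rewrite IH; split.
- by case=> [<-|[]]; auto.
- by case=> [[<-|]]; auto.
- by case; auto.
- by case=> [[<-|]] //; rewrite py.
Qed.

Lemma lIn_flatten (A : Type) (x : A) ss : lIn x (flatten ss) <-> exists s, lIn s ss /\ lIn x s.
Proof.
elim: ss => [|s ss IH] /=; first by split=> // [[s []]].
rewrite lIn_cat IH; split.
- case=> [h|[s' [h1 h2]]]; [by exists s; split; [left|]| by exists s'; split; [right|]].
- case=> s' [[<-|h1] h2]; [by left| right; exists s'; by split].
Qed.

Definition pt (S : sig) (M : structure S) : M := epsilon (carrier_inh M) (fun _ => True).

Section UF.
Context (L : Type) (D : (L -> Prop) -> Prop) (hU : ultrafilter D).

Lemma uf_T : D (fun _ => True). Proof. by case: hU. Qed.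
Lemma uf_mono X Y : D X -> (forall t, X t -> Y t) -> D Y.
Proof. by case: hU => _ [_ [h _]]; apply: h. Qed.
Lemma uf_and X Y : D X -> D Y -> D (fun t => X t /\ Y t).
Proof. by case: hU => _ [_ [_ [h _]]]; apply: h. Qed.
Lemma uf_nF : ~ D (fun _ => False). Proof. by case: hU => _ []. Qed.
Lemma uf_neg X : D (fun t => ~ X t) <-> ~ D X.
Proof.
split.
- move=> h1 h2; apply: uf_nF; apply: uf_mono (uf_and h2 h1) _; by move=> t [].
- case: hU => _ [_ [_ [_ h]]]; by case: (h X).
Qed.
Lemma uf_ext X Y : (forall t, X t <-> Y t) -> D X <-> D Y.
Proof. move=> h; split=> hh; apply: uf_mono hh _ => t; apply h. Qed.
Lemma uf_ext_on Z X Y : D Z -> (forall t, Z t -> (X t <-> Y t)) -> D X <-> D Y.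
Proof.
move=> hZ h; split=> hh; apply: uf_mono (uf_and hZ hh) _ => t [h1 h2]; by apply (h t h1).
Qed.
Lemma uf_list (T : Type) (s : seq T) (P : T -> L -> Prop) :
  (forall x, lIn x s -> D (P x)) -> D (fun t => forall x, lIn x s -> P x t).
Proof.
elim: s => [|y s IH] /= h.
- by apply: uf_mono uf_T _.
- apply: uf_mono (uf_and (h y (or_introl erefl)) (IH (fun x hx => h x (or_intror hx)))) _.
  by move=> t [h1 h2] x [<-|hx]; auto.
Qed.
Lemma uf_fin n (P : 'I_n -> L -> Prop) : (forall i, D (P i)) -> D (fun t => forall i, P i t).
Proof.
move=> h; apply: uf_mono (uf_list (s := enum 'I_n) (fun x _ => h x)) _.
move=> t ht i; apply: ht; apply/lIn_mem; by rewrite mem_enum.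
Qed.
End UF.

Section Los.
Context (L : Type) (D : (L -> Prop) -> Prop) (hU : ultrafilter D) (S : sig)
  (M U : structure S) (pi : (L -> M) -> U)
  (Hsurj : forall u : U, exists f, pi f = u)
  (Heq : forall f g, pi f = pi g <-> D (fun t => f t = g t))
  (Hrel : forall r (a : 'I_(rarity r) -> L -> M),
      rels U r (fun i => pi (a i)) <-> D (fun t => rels M r (fun i => a i t)))
  (Hfun : forall f (a : 'I_(farity f) -> L -> M),
      funs U f (fun i => pi (a i)) = pi (fun t => funs M f (fun i => a i t))).

Lemma los_term (rho : nat -> L -> M) (tm : term S) :
  eval U (fun n => pi (rho n)) tm = pi (fun t => eval M (fun n => rho n t) tm).
Proof.
elim: tm => [n|f args IH] //=.
have -> : (fun i => eval U (fun n => pi (rho n)) (args i)) =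
          (fun i => pi ((fun i t => eval M (fun n => rho n t) (args i)) i)).
  by apply: functional_extensionality => i; rewrite IH.
by rewrite Hfun.
Qed.

Lemma los (phi : formula S) : forall rho : nat -> L -> M,
  holds U (fun n => pi (rho n)) phi <-> D (fun t => holds M (fun n => rho n t) phi).
Proof.
elim: phi => [t1 t2|r args|p IH|p IHp q IHq|p IH] rho /=.
- by rewrite !los_term Heq.
- have -> : (fun i => eval U (fun n => pi (rho n)) (args i)) =
          (fun i => pi ((fun i t => eval M (fun n => rho n t) (args i)) i)).
    by apply: functional_extensionality => i; rewrite los_term.
  by rewrite Hrel.
- rewrite IH; split=> h; [by apply/(uf_neg hU)| by apply/(uf_neg hU)].
- rewrite IHp IHq; split.
  + by case=> h1 h2; apply: (uf_and hU).
  + move=> h; split; [apply: (uf_mono hU h) => t []| apply: (uf_mono hU h) => t []]; auto.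
- split.
  + case=> b; case: (Hsurj b) => g <-.
    have -> : scons (pi g) (fun n => pi (rho n)) = (fun n => pi (scons g rho n)).
      by apply: functional_extensionality => -[|n].
    rewrite IH => h; apply: (uf_mono hU h) => t ht; exists (g t).
    have -> : scons (g t) (fun n => rho n t) = (fun n => scons g rho n t).
      by apply: functional_extensionality => -[|n].
    done.
  + move=> h.
    pose g := fun t => epsilon (carrier_inh M) (fun c => holds M (scons c (fun n => rho n t)) p).
    exists (pi g).
    have -> : scons (pi g) (fun n => pi (rho n)) = (fun n => pi (scons g rho n)).
      by apply: functional_extensionality => -[|n].
    rewrite IH; apply: (uf_mono hU h) => t ht.
    have -> : (fun n => scons g rho n t) = scons (g t) (fun n => rho n t).
      by apply: functional_extensionality => -[|n].
    exact: (epsilon_spec (carrier_inh M) (fun c => holds M (scons c (fun n => rho n t)) p) ht).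
Qed.

Definition rep (u : U) : L -> M :=
  epsilon (inhabits (fun _ : L => pt M)) (fun f => pi f = u).
Lemma repK u : pi (rep u) = u.
Proof. exact: (epsilon_spec (inhabits (fun _ : L => pt M)) (fun f => pi f = u) (Hsurj u)). Qed.

Lemma los_env (phi : formula S) (e : nat -> U) :
  holds U e phi <-> D (fun t => holds M (fun n => rep (e n) t) phi).
Proof.
rewrite -(los phi (fun n => rep (e n))).
have -> : (fun n => pi (rep (e n))) = e by apply: functional_extensionality => n; rewrite repK.
done.
Qed.

End Los.

Lemma los_up (L : Type) (D : (L -> Prop) -> Prop) (hU : ultrafilter D) (S : sig)
  (M U : structure S) : is_ultrapower D M U ->
  exists pi : (L -> M) -> U, (forall u, exists f, pi f = u) /\
    (forall f g, pi f = pi g <-> D (fun t => f t = g t)) /\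
    forall phi rho, holds U (fun n => pi (rho n)) phi <-> D (fun t => holds M (fun n => rho n t) phi).
Proof.
case=> pi [h1 [h2 [h3 h4]]]; exists pi; split=> //; split=> //.
by move=> phi rho; apply: los.
Qed.

Section UPcon.
Context (L : Type) (D : (L -> Prop) -> Prop) (hU : ultrafilter D) (S : sig) (M : structure S).

Definition cls (f : L -> M) : (L -> M) -> Prop := fun g => D (fun t => f t = g t).
Definition UPc := { P : (L -> M) -> Prop | exists f, P = cls f }.
Definition upi (f : L -> M) : UPc := exist _ (cls f) (ex_intro _ f erefl).
Lemma upi_surj (u : UPc) : exists f, upi f = u.
Proof.
case: u => P [f hf]; exists f; subst; rewrite /upi; f_equal; apply: proof_irrelevance.
Qed.
Lemma upi_eq f g : upi f = upi g <-> D (fun t => f t = g t).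
Proof.
split.
- move=> h; have : cls f g.
    have -> : cls f = cls g by move: (f_equal (@proj1_sig _ _) h).
    by rewrite /cls; apply: (uf_mono hU (uf_T hU)).
  done.
- move=> h; rewrite /upi.
  have e : cls f = cls g.
    apply: functional_extensionality => k; apply: propositional_extensionality.
    split=> hk; apply: (uf_mono hU (uf_and hU h hk)) => t [-> ->] //.
  move: (ex_intro _ f erefl : exists f0, cls f = cls f0).
  rewrite e => pr; f_equal; apply: proof_irrelevance.
Qed.
Definition urep (u : UPc) : L -> M := epsilon (inhabits (fun _ : L => pt M)) (fun f => upi f = u).
Lemma urepK u : upi (urep u) = u.
Proof. exact: (epsilon_spec (inhabits (fun _ : L => pt M)) (fun f => upi f = u) (upi_surj u)). Qed.

Definition UP : structure S :=
  {| carrier := UPc; carrier_inh := inhabits (upi (fun _ => pt M));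
     funs := fun f args => upi (fun t => funs M f (fun i => urep (args i) t));
     rels := fun r args => D (fun t => rels M r (fun i => urep (args i) t)) |}.

Lemma urep_upi n (a : 'I_n -> L -> M) : D (fun t => forall i, urep (upi (a i)) t = a i t).
Proof. apply: (uf_fin hU) => i; apply/upi_eq; by rewrite urepK. Qed.

Lemma UP_rel r (a : 'I_(rarity r) -> L -> M) :
  rels UP r (fun i => upi (a i)) <-> D (fun t => rels M r (fun i => a i t)).
Proof.
apply: (uf_ext_on hU (urep_upi a)) => t ht.
by have -> // : (fun i => urep (upi (a i)) t) = (fun i => a i t) by apply: functional_extensionality.
Qed.

Lemma UP_fun f (a : 'I_(farity f) -> L -> M) :
  funs UP f (fun i => upi (a i)) = upi (fun t => funs M f (fun i => a i t)).
Proof.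
apply/upi_eq; apply: (uf_mono hU (urep_upi a)) => t ht /=.
by have -> // : (fun i => urep (upi (a i)) t) = (fun i => a i t) by apply: functional_extensionality.
Qed.

Lemma UP_is : is_ultrapower D M UP.
Proof.
exists upi; split; first exact: upi_surj.
split; first exact: upi_eq.
split; [exact: UP_rel| exact: UP_fun].
Qed.

Lemma UP_los phi rho : holds UP (fun n => upi (rho n)) phi <-> D (fun t => holds M (fun n => rho n t) phi).
Proof.
apply: (los hU) => //; [exact: upi_surj| exact: upi_eq| exact: UP_rel| exact: UP_fun].
Qed.
End UPcon.


Section Syntax.
Context (S : sig).

Fixpoint trename (rho : nat -> nat) (t : term S) : term S :=
  match t with
  | Var n => Var (rho n)
  | App f args => App (fun i => trename rho (args i))
  end.

Definition up (rho : nat -> nat) : nat -> nat :=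
  fun m => match m with 0 => 0 | k.+1 => (rho k).+1 end.

Fixpoint frename (rho : nat -> nat) (phi : formula S) : formula S :=
  match phi with
  | Eq t u => Eq (trename rho t) (trename rho u)
  | Rel r args => Rel (fun i => trename rho (args i))
  | Neg p => Neg (frename rho p)
  | And p q => And (frename rho p) (frename rho q)
  | Ex p => Ex (frename (up rho) p)
  end.

Lemma eval_rename (M : structure S) e rho t :
  eval M e (trename rho t) = eval M (fun n => e (rho n)) t.
Proof.
elim: t => [n|f args IH] //=; congr (funs M f _); apply: functional_extensionality => i; apply: IH.
Qed.

Lemma holds_rename (M : structure S) phi : forall e rho,
  holds M e (frename rho phi) <-> holds M (fun n => e (rho n)) phi.
Proof.
elim: phi => [t1 t2|r args|p IH|p IHp q IHq|p IH] e rho /=.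
- by rewrite !eval_rename.
- have -> // : (fun i => eval M e (trename rho (args i))) = (fun i => eval M (fun n => e (rho n)) (args i)).
  by apply: functional_extensionality => i; rewrite eval_rename.
- by rewrite IH.
- by rewrite IHp IHq.
- split=> -[b hb]; exists b; move: hb; rewrite IH;
  have -> // : (fun n => scons b e (up rho n)) = scons b (fun n => e (rho n));
  by apply: functional_extensionality => -[|n].
Qed.

Lemma tbounded_rename N rho t : (forall m, rho m < N) -> tbounded N (trename rho t).
Proof. move=> h; elim: t => [n|f args IH] //=. Qed.

Lemma bounded_rename phi : forall N rho, (forall m, rho m < N) -> bounded N (frename rho phi).
Proof.
elim: phi => [t1 t2|r args|p IH|p IHp q IHq|p IH] N rho h /=.
- by split; apply: tbounded_rename.
- by move=> i; apply: tbounded_rename.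
- by apply: IH.
- by split; [apply: IHp| apply: IHq].
- by apply: IH => -[|m] //=; rewrite ltnS.
Qed.

Lemma teval_bounded (M : structure S) n e1 e2 t :
  tbounded n t -> (forall i, i < n -> e1 i = e2 i) -> eval M e1 t = eval M e2 t.
Proof.
move=> + h; elim: t => [m|f args IH] /=; first by apply: h.
move=> hb; congr (funs M f _); apply: functional_extensionality => i; exact: IH.
Qed.

Lemma holds_bounded (M : structure S) phi : forall n e1 e2,
  bounded n phi -> (forall i, i < n -> e1 i = e2 i) -> holds M e1 phi <-> holds M e2 phi.
Proof.
elim: phi => [t1 t2|r args|p IH|p IHp q IHq|p IH] n e1 e2 /= hb h.
- by case: hb => h1 h2; rewrite (teval_bounded h1 h) (teval_bounded h2 h).
- have -> // : (fun i => eval M e1 (args i)) = (fun i => eval M e2 (args i)).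
  apply: functional_extensionality => i; exact: teval_bounded (hb i) h.
- by rewrite (IH n e1 e2).
- by case: hb => h1 h2; rewrite (IHp n e1 e2) // (IHq n e1 e2).
- split=> -[b hh]; exists b; move: hh; rewrite (IH n.+1 (scons b e1) (scons b e2)) //;
  by move=> -[|i] //= /h.
Qed.

Definition tru : formula S := Ex (Eq (Var 0) (Var 0)).
Fixpoint andl (l : seq (formula S)) : formula S :=
  match l with [::] => tru | p :: l => And p (andl l) end.

Lemma holds_andl (M : structure S) e l : holds M e (andl l) <-> forall p, lIn p l -> holds M e p.
Proof.
elim: l => [|p l IH] /=.
- split=> // _; exists (pt M) => //.
- rewrite IH; split.
  + by case=> h1 h2 q [<-|hq]; auto.
  + by move=> h; split; auto.
Qed.

Lemma bounded_andl N l : (forall p, lIn p l -> bounded N p) -> bounded N (andl l).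
Proof.
elim: l => [|p l IH] /= h; first by [].
by split; auto.
Qed.

Fixpoint exn (n : nat) (psi : formula S) : formula S :=
  match n with 0 => psi | n.+1 => Ex (exn n psi) end.

Lemma bounded_exn psi n : forall k, bounded (k + n) psi -> bounded k (exn n psi).
Proof.
elim: n => [|n IH] k /=; first by rewrite addn0.
by move=> h; apply: IH; rewrite addSnnS.
Qed.

Lemma holds_exn (M : structure S) psi n : forall e,
  holds M e (exn n psi) <->
  exists Y : nat -> M, holds M (fun m => if m < n then Y m else e (m - n)) psi.
Proof.
elim: n => [|n IH] e /=.
- split; first by move=> h; exists e; move: h; have -> // : (fun m => e (m - 0)) = e
    by apply: functional_extensionality => m; rewrite subn0.
  case=> Y; have -> // : (fun m => e (m - 0)) = e by apply: functional_extensionality => m; rewrite subn0.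
- split.
  + case=> b /IH [Y hY]; exists (fun m => if m < n then Y m else b); move: hY.
    have -> // : (fun m => if m < n then Y m else scons b e (m - n)) =
        (fun m => if m < n.+1 then (if m < n then Y m else b) else e (m - n.+1)).
    apply: functional_extensionality => m.
    case: (ltngtP m n) => hm.
    * by rewrite ltnS ltnW.
    * rewrite ltnS leqNgt hm /=.
      by rewrite -(subnSK hm).
    * by rewrite hm ltnSn subnn.
  + case=> Y hY; exists (Y n); apply/IH; exists Y; move: hY.
    have -> // : (fun m => if m < n.+1 then Y m else e (m - n.+1)) =
       (fun m => if m < n then Y m else scons (Y n) e (m - n)).
    apply: functional_extensionality => m.
    case: (ltngtP m n) => hm.
    * by rewrite ltnS ltnW.
    * rewrite ltnS leqNgt hm /=.
      by rewrite -(subnSK hm).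
    * by rewrite hm ltnSn subnn.
Qed.

End Syntax.

Fixpoint subs (T : Type) (l : seq T) : seq (seq T) :=
  match l with [::] => [:: [::]] | x :: l => subs l ++ map (cons x) (subs l) end.

Lemma subs_filter (T : Type) (p : pred T) l : lIn (filter p l) (subs l).
Proof.
elim: l => [|x l IH] /=; first by left.
apply/lIn_cat; case: (p x); [right; apply/lIn_map; exists (filter p l); by split| by left].
Qed.

Lemma subs_in (T : Type) (l w : seq T) x : lIn w (subs l) -> lIn x w -> lIn x l.
Proof.
elim: l w => [|y l IH] w /=; first by case=> // <-.
case/lIn_cat => [h hx|/lIn_map [w' [h ->]] /= [<-|hx]]; [right; exact: IH h hx| by left| right; exact: IH h hx].
Qed.

Fixpoint allk (T : Type) (Q : seq T) (k : nat) : seq (seq T) :=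
  match k with 0 => [:: [::]]
  | k.+1 => flatten (map (fun q => map (cons q) (allk Q k)) Q) end.

Lemma allk_in (T : Type) (Q : seq T) s : (forall y, lIn y s -> lIn y Q) -> lIn s (allk Q (size s)).
Proof.
elim: s => [|y s IH] h /=; first by left.
apply/lIn_flatten; exists (map (cons y) (allk Q (size s))); split.
- apply/lIn_map; exists y; split => //; apply: h; by left.
- apply/lIn_map; exists s; split => //; apply: IH => z hz; apply: h; by right.
Qed.

Lemma lIn_nth (T : Type) (d : T) (s : seq T) x : lIn x s -> exists j, j < size s /\ nth d s j = x.
Proof.
elim: s => [|y s IH] //= [<-|/IH [j [h1 h2]]]; first by exists 0.
by exists j.+1.
Qed.


Definition losmap (L : Type) (D : (L -> Prop) -> Prop) (S : sig) (M U : structure S)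
  (pi : (L -> M) -> U) : Prop :=
  (forall u, exists f, pi f = u) /\
  (forall f g, pi f = pi g <-> D (fun t => f t = g t)) /\
  (forall phi rho, holds U (fun n => pi (rho n)) phi <-> D (fun t => holds M (fun n => rho n t) phi)).
Arguments losmap [L] D [S] M U pi.

Lemma up_losmap (L : Type) (D : (L -> Prop) -> Prop) (hU : ultrafilter D) (S : sig)
  (M U : structure S) : is_ultrapower D M U -> exists pi, losmap D M U pi.
Proof. by move=> h; case: (los_up hU h) => pi hh; exists pi. Qed.

Lemma UP_losmap (L : Type) (D : (L -> Prop) -> Prop) (hU : ultrafilter D) (S : sig)
  (M : structure S) : losmap D M (UP D M) (upi D (M:=M)).
Proof.
split; first exact: upi_surj.
split; first exact: upi_eq.
exact: UP_los.
Qed.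

Definition envI (T : Type) n (a : 'I_n -> T) (d : T) : nat -> T :=
  fun m => match (insub m : option 'I_n) with Some i => a i | None => d end.

Lemma envI_ord (T : Type) n (a : 'I_n -> T) d (i : 'I_n) : envI a d i = a i.
Proof. by rewrite /envI valK. Qed.

Lemma envI_lt (T : Type) n (a : 'I_n -> T) d m (h : m < n) : envI a d m = a (Ordinal h).
Proof. by rewrite /envI insubT. Qed.

Lemma envI_ge (T : Type) n (a : 'I_n -> T) d m : n <= m -> envI a d m = d.
Proof. by move=> h; rewrite /envI insubF // ltnNge h. Qed.

Section EnvLemmas.
Context (S : sig) (M : structure S).

Lemma holdsT_envI (phi : formula S) n (a : 'I_n -> M) d :
  bounded n phi -> holdsT M phi a <-> holds M (envI a d) phi.
Proof.
move=> hb; split.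
- by move=> h; apply: h => i; rewrite envI_ord.
- move=> h e he; apply: (proj2 (holds_bounded (e1:=e) hb _) h) => i hi.
  by rewrite envI_lt -he.
Qed.

Lemma holdsG_envI (phi : formula S) n (a : 'I_n -> M) b :
  bounded n.+1 phi -> holdsG M phi a b <-> holds M (envI a b) phi.
Proof.
move=> hb; split.
- by move=> h; apply: h => [i|]; rewrite ?envI_ord ?envI_ge.
- move=> h e he hn; apply: (proj2 (holds_bounded (e1:=e) hb _) h) => i hi.
  case: (ltngtP i n) hi => hin //.
  + by rewrite envI_lt -he.
  + by rewrite ltnS leqNgt hin.
  + by rewrite hin envI_ge.
Qed.

Definition env2 (x y : M) : nat -> M := scons x (scons y (fun _ => x)).

Lemma holds2_env2 (phi : formula S) x y :
  bounded 2 phi -> holds2 M phi x y <-> holds M (env2 x y) phi.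
Proof.
move=> hb; split; first by move=> h; apply: h.
move=> h e h0 h1; apply: (proj2 (holds_bounded (e1:=e) hb _) h) => -[|[|i]] //.
Qed.
End EnvLemmas.

Section LosUtil.
Context (L : Type) (D : (L -> Prop) -> Prop) (S : sig) (M U : structure S)
  (pi : (L -> M) -> U) (hl : losmap D M U pi).

Lemma lm_eq f g : pi f = pi g <-> D (fun t => f t = g t).
Proof. by case: hl => _ []. Qed.
Lemma lm_los phi rho : holds U (fun n => pi (rho n)) phi <-> D (fun t => holds M (fun n => rho n t) phi).
Proof. by case: hl => _ []. Qed.

Definition lrep (u : U) : L -> M := epsilon (inhabits (fun _ : L => pt M)) (fun f => pi f = u).
Lemma lrepK u : pi (lrep u) = u.
Proof. case: hl => hs _; exact: (epsilon_spec (inhabits (fun _ : L => pt M)) (fun f => pi f = u) (hs u)). Qed.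

Lemma los_penv phi k (c : L -> M) (g : 'I_k -> L -> M) :
  holds U (penv (pi c) (fun i => pi (g i))) phi <->
  D (fun t => holds M (penv (c t) (fun i => g i t)) phi).
Proof.
rewrite -(lm_los phi (fun n t => penv (c t) (fun i => g i t) n)).
have -> // : penv (pi c) (fun i => pi (g i)) = (fun n => pi (fun t => penv (c t) (fun i => g i t) n)).
apply: functional_extensionality => -[|n] //=.
by case: insub.
Qed.

Lemma los_entry (x : entry U) (c : L -> M) :
  holds_entry (pi c) x <->
  D (fun t => holds M (penv (c t) (fun i => lrep ((projT2 x).2 i) t)) (projT2 x).1).
Proof.
rewrite /holds_entry -los_penv.
have -> // : (fun i => pi (lrep ((projT2 x).2 i))) = (projT2 x).2.
by apply: functional_extensionality => i; rewrite lrepK.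
Qed.

Lemma los_envI phi k (g : 'I_k -> L -> M) (d : L -> M) :
  holds U (envI (fun i => pi (g i)) (pi d)) phi <->
  D (fun t => holds M (envI (fun i => g i t) (d t)) phi).
Proof.
rewrite -(lm_los phi (fun n t => envI (fun i => g i t) (d t) n)).
have -> // : envI (fun i => pi (g i)) (pi d) = (fun n => pi (fun t => envI (fun i => g i t) (d t) n)).
apply: functional_extensionality => n; rewrite /envI.
by case: insub.
Qed.

Lemma los_env2 phi (f g : L -> M) :
  holds U (env2 (pi f) (pi g)) phi <-> D (fun t => holds M (env2 (f t) (g t)) phi).
Proof.
rewrite -(lm_los phi (fun n t => env2 (f t) (g t) n)).
have -> // : env2 (pi f) (pi g) = (fun n => pi (fun t => env2 (f t) (g t) n)).
by apply: functional_extensionality => -[|[|n]].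
Qed.
End LosUtil.

Lemma interp_up (L : Type) (D : (L -> Prop) -> Prop) (hU : ultrafilter D) (S0 S : sig)
  (I : interpretation S0 S) (Ms : structure S) (K : structure S0) :
  bounded 2 (i_eq I) -> (forall r, bounded (rarity r) (i_rel I r)) ->
  (forall f, bounded (farity f).+1 (i_fun I f)) ->
  is_interp I Ms K -> is_interp I (UP D Ms) (UP D K).
Proof.
move=> b1 b2 b3 [hK [k1 [k2 [k3 k4]]]].
have lmS := UP_losmap hU Ms.
pose h := fun u : UP D K => upi D (fun t => hK (urep u t)).
have eK : forall a b : UP D K, a = b <-> D (fun t => urep a t = urep b t).
  move=> a b; rewrite -(upi_eq hU) !urepK //.
have e2 : forall a b : UP D K,
   holds2 (UP D Ms) (i_eq I) (h a) (h b) <->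
   D (fun t => holds2 Ms (i_eq I) (hK (urep a t)) (hK (urep b t))).
  move=> a b; rewrite holds2_env2 // (los_env2 lmS).
  by apply: (uf_ext hU) => t; rewrite holds2_env2.
exists h; split.
- move=> a b; rewrite e2 eK; apply: (uf_ext hU) => t; exact: k1.
split.
- move=> m hm.
  pose g := urep m.
  have gm : upi D g = m by rewrite urepK.
  have hg : D (fun t => holds2 Ms (i_eq I) (g t) (g t)).
    move: hm; rewrite -gm holds2_env2 // (los_env2 lmS).
    by move=> hh; apply: (uf_mono hU hh) => t; rewrite holds2_env2.
  pose c := fun t => epsilon (carrier_inh K) (fun c => holds2 Ms (i_eq I) (hK c) (g t)).
  exists (upi D c).
  rewrite -gm /h holds2_env2 // (los_env2 lmS).
  have hc : D (fun t => urep (upi D c) t = c t) by apply/(upi_eq hU); rewrite urepK.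
  apply: (uf_mono hU (uf_and hU hc hg)) => t [-> ht].
  rewrite -holds2_env2 //.
  have := k2 (g t) ht.
  exact: (epsilon_spec (carrier_inh K) (fun c => holds2 Ms (i_eq I) (hK c) (g t))).
split.
- move=> r a /=.
  rewrite (@holdsT_envI _ (UP D Ms) _ _ _ (upi D (fun _ => pt Ms))) // /h (los_envI lmS).
  apply: (uf_ext hU) => t; rewrite k3 (@holdsT_envI _ _ _ _ _ (pt Ms)) //.
- move=> f a b /=.
  rewrite (holdsG_envI) // /h.
  have -> : envI (fun i => upi D (fun t => hK (urep (a i) t))) (upi D (fun t => hK (urep b t))) =
            envI (fun i => upi D ((fun i t => hK (urep (a i) t)) i)) (upi D (fun t => hK (urep b t))) by [].
  rewrite (los_envI lmS).
  rewrite -{1}(urepK b) (upi_eq hU).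
  apply: (uf_ext hU) => t; rewrite k4 holdsG_envI //.
Qed.


Lemma pickle_inj' (T : countType) : injective (@pickle T).
Proof. exact: pcan_inj pickleK. Qed.

Section Enc.
Context (S : sig) (fe : Defs.fsym S -> nat) (re : rsym S -> nat) (hfe : injective fe) (hre : injective re).

Fixpoint tenc (t : term S) : GenTree.tree nat :=
  match t with
  | Var n => GenTree.Node 0 [:: GenTree.Leaf n]
  | App f args => GenTree.Node 1 (GenTree.Leaf (fe f) :: [seq tenc (args i) | i <- enum 'I_(farity f)])
  end.

Lemma tenc_inj : injective tenc.
Proof.
elim=> [n|f args IH] [m|g args2] //=; first by case=> ->.
case=> /hfe ef; subst g => /eq_in_map hm.
have -> // : args = args2.
apply: functional_extensionality => i; apply: IH; apply: hm; by rewrite mem_enum.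
Qed.

Fixpoint fenc (phi : formula S) : GenTree.tree nat :=
  match phi with
  | Eq t u => GenTree.Node 2 [:: tenc t; tenc u]
  | Rel r args => GenTree.Node 3 (GenTree.Leaf (re r) :: [seq tenc (args i) | i <- enum 'I_(rarity r)])
  | Neg p => GenTree.Node 4 [:: fenc p]
  | And p q => GenTree.Node 5 [:: fenc p; fenc q]
  | Ex p => GenTree.Node 6 [:: fenc p]
  end.

Lemma fenc_inj : injective fenc.
Proof.
elim=> [t1 t2|r args|p IH|p IHp q IHq|p IH] [u1 u2|r2 args2|p2|p2 q2|p2] //=.
- by case=> /tenc_inj -> /tenc_inj ->.
- case=> /hre er; subst r2 => /eq_in_map hm.
  have -> // : args = args2.
  apply: functional_extensionality => i; apply: tenc_inj; apply: hm; by rewrite mem_enum.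
- by case=> /IH ->.
- by case=> /IHp -> /IHq ->.
- by case=> /IH ->.
Qed.
End Enc.

Lemma inf_seq (L : Type) : infinite_type L -> exists l : nat -> L, injective l.
Proof.
move=> hinf.
have hx : forall s : seq L, exists x, ~ lIn x s.
  move=> s; apply: NNPP => h; apply: hinf; exists s => x; apply: NNPP => hx; apply: h; by exists x.
have inh : inhabited L by case: (hx [::]) => x _; constructor.
pose nx := fun s => epsilon inh (fun x => ~ lIn x s).
have nxP : forall s, ~ lIn (nx s) s by move=> s; exact: (epsilon_spec inh (fun x => ~ lIn x s) (hx s)).
pose fix ls n := match n with 0 => [::] | n.+1 => nx (ls n) :: ls n end.
have hls : forall m n, m < n -> lIn (nx (ls m)) (ls n).
  move=> m; elim=> [|n IH] //; rewrite ltnS leq_eqVlt => /orP [/eqP ->|/IH h] /=; by [left| right].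
exists (fun n => nx (ls n)) => m n /= e.
case: (ltngtP m n) => // h.
- by have := hls _ _ h; rewrite e => /nxP.
- by have := hls _ _ h; rewrite -e => /nxP.
Qed.

Lemma cinc (L : Type) (D : (L -> Prop) -> Prop) : infinite_type L -> regular_ultrafilter D ->
  exists Z : nat -> L -> Prop, (forall n, D (Z n)) /\ forall t, exists ns : seq nat, forall n, Z n t -> lIn n ns.
Proof.
move=> hinf [hU [X [hX hXf]]].
case: (inf_seq hinf) => l hl.
exists (fun n => X (l n)); split; first by move=> n; exact: hX.
move=> t; case: (hXf t) => s hs.
exists (map (fun x => epsilon (inhabits 0) (fun n => l n = x)) s) => n hn.
apply/lIn_map; exists (l n); split; first exact: hs.
apply: hl; symmetry; exact: (epsilon_spec (inhabits 0) (fun m => l m = l n) (ex_intro _ n erefl)).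
Qed.

Lemma lIn_le_max (ns : seq nat) n : lIn n ns -> n <= foldr maxn 0 ns.
Proof.
elim: ns => [|m ns IH] //= [<-|/IH h]; first by rewrite leq_maxl.
exact: leq_trans h (leq_maxr _ _).
Qed.

Lemma max_exists (P : nat -> Prop) B : (exists n, P n) -> (forall n, P n -> n <= B) ->
  exists N, P N /\ forall n, P n -> n <= N.
Proof.
move=> [n0 h0] hB.
have ex : exists i, pb (P i) by exists n0; apply/pbP.
have ub : forall i, pb (P i) -> i <= B by move=> i /pbP; apply: hB.
case: (ex_maxnP ex ub) => i /pbP hi hmax; exists i; split=> // n hn; apply: hmax; exact/pbP.
Qed.

Lemma lIn_pmap (A B : Type) (f : A -> option B) s y : lIn y (pmap f s) <-> exists x, lIn x s /\ f x = Some y.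
Proof.
elim: s => [|x s IH] /=; first by split=> // [[x []]].
case e: (f x) => [z|] /=; rewrite IH; split.
- case=> [<-|[w [h1 h2]]]; [by exists x; split; [left|]| by exists w; split; [right|]].
- case=> w [[<-|h1] h2]; [left; congruence| right; by exists w].
- case=> w [h1 h2]; by exists w; split; [right|].
- case=> w [[<-|h1] h2]; [congruence| by exists w].
Qed.

Lemma lIn_iota m n : lIn m (iota 0 n.+1) <-> m <= n.
Proof. by rewrite (lIn_mem m) mem_iota add0n ltnS. Qed.

Definition ecode (S : sig) (fe : Defs.fsym S -> nat) (re : rsym S -> nat) (V : Type) (e' : V -> nat)
  (x : {k : nat & (formula S * ('I_k -> V))%type}) : nat :=
  pickle (projT1 x, fenc fe re (projT2 x).1, [seq e' ((projT2 x).2 i) | i <- enum 'I_(projT1 x)]).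

Lemma ecode_inj (S : sig) (fe : Defs.fsym S -> nat) (re : rsym S -> nat) (hfe : injective fe) (hre : injective re)
  (V : Type) (e' : V -> nat) (A : V -> Prop) (he : forall u v, A u -> A v -> e' u = e' v -> u = v)
  (x y : {k : nat & (formula S * ('I_k -> V))%type}) :
  (forall i, A ((projT2 x).2 i)) -> (forall i, A ((projT2 y).2 i)) ->
  ecode fe re e' x = ecode fe re e' y -> x = y.
Proof.
case: x => k [phi a]; case: y => k' [phi' a'] /= ha ha' /pickle_inj' [ek /(fenc_inj hfe hre) ef].
subst k' phi' => /eq_in_map hm.
have -> // : a = a'.
apply: functional_extensionality => i; apply: he; [exact: ha| exact: ha'|].
apply: hm; by rewrite mem_enum.
Qed.

(* aleph_1-saturation of ultrapowers by countably incomplete ultrafilters *)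
Lemma up_aleph1 (L : Type) (D : (L -> Prop) -> Prop) (hU : ultrafilter D)
  (Z : nat -> L -> Prop) (hZ : forall n, D (Z n))
  (hZf : forall t, exists ns : seq nat, forall n, Z n t -> lIn n ns)
  (S : sig) (hS : countable_sig S) (M U : structure S) (pi : (L -> M) -> U)
  (hl : losmap D M U pi) : saturated aleph1_small U.
Proof.
case: hS => [[fe hfe] [re hre]].
move=> A [e he] p hp hfs.
pose e' := fun v : U => match excluded_middle_informative (A v) with
                         | left h => e (exist _ v h) | right _ => 0 end.
have he' : forall u v, A u -> A v -> e' u = e' v -> u = v.
  move=> u v hu hv; rewrite /e'.
  case: excluded_middle_informative => // hu'; case: excluded_middle_informative => // hv'.
  by move/he => [].
pose code := ecode fe re e'.
have code_inj : forall x y, p x -> p y -> code x = code y -> x = y.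
  move=> x y hx hy; apply: (ecode_inj hfe hre he'); [exact: (proj2 (hp x hx))| exact: (proj2 (hp y hy))].
pose dec := fun m => match excluded_middle_informative (exists x, p x /\ code x = m) with
                     | left h => Some (proj1_sig (constructive_indefinite_description _ h))
                     | right _ => None end.
have decP : forall m x, dec m = Some x -> p x /\ code x = m.
  move=> m x; rewrite /dec; case: excluded_middle_informative => // h [<-].
  exact: (proj2_sig (constructive_indefinite_description _ h)).
pose G := fun n => pmap dec (iota 0 n.+1).
have GP : forall n x, lIn x (G n) <-> p x /\ code x <= n.
  move=> n x; rewrite lIn_pmap; split.
  - case=> m [/lIn_iota hm /decP [px em]]; subst m; by split.
  - case=> px hc; exists (code x); split; first exact/lIn_iota.
    rewrite /dec; case: excluded_middle_informative => h.
    + case: (proj2_sig (constructive_indefinite_description _ h)) => h1 h2.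
      by congr Some; apply: code_inj.
    + by exfalso; apply: h; exists x.
pose locM := fun (x : entry U) t c => holds M (penv c (fun i => lrep pi ((projT2 x).2 i) t)) (projT2 x).1.
pose Bs := fun n t => exists c, forall x, lIn x (G n) -> locM x t c.
have hB : forall n, D (Bs n).
  move=> n; case: (hfs (G n)) => [x /GP []//|b hb].
  have : D (fun t => forall x, lIn x (G n) -> locM x t (lrep pi b t)).
    apply: (uf_list hU) => x hx; have := hb x hx; by rewrite -{1}(lrepK hl b) (los_entry hl).
  by move=> hh; apply: (uf_mono hU hh) => t ht; exists (lrep pi b t).
pose Cs := fun n t => forall m, m <= n -> Z m t /\ Bs m t.
have hC : forall n, D (Cs n).
  move=> n; have := uf_list hU (s := iota 0 n.+1) (P := fun m t => Z m t /\ Bs m t)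
                     (fun m _ => uf_and hU (hZ m) (hB m)).
  by move=> hh; apply: (uf_mono hU hh) => t ht m hm; apply: ht; apply/lIn_iota.
have hbeta : forall t, exists c, forall n, Cs n t -> forall x, lIn x (G n) -> locM x t c.
  move=> t; case: (classic (exists n, Cs n t)) => [hex|hno]; last first.
    by exists (pt M) => n hn; exfalso; apply: hno; exists n.
  case: (hZf t) => ns hns.
  case: (max_exists (B := foldr maxn 0 ns) hex) => [n hn|N [hN hmax]].
    apply: lIn_le_max; apply: hns; exact: (proj1 (hn n (leqnn n))).
  case: (proj2 (hN N (leqnn N))) => c hc; exists c => n hn x hx; apply: hc.
  case/GP: hx => px hcx; apply/GP; split=> //; exact: leq_trans hcx (hmax n hn).
pose beta := fun t => epsilon (carrier_inh M) (fun c => forall n, Cs n t -> forall x, lIn x (G n) -> locM x t c).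
exists (pi beta) => x px.
apply/(los_entry hl); apply: (uf_mono hU (hC (code x))) => t ht.
have := epsilon_spec (carrier_inh M) (fun c => forall n, Cs n t -> forall x, lIn x (G n) -> locM x t c) (hbeta t).
move=> hh; apply: (hh (code x) ht); apply/GP; by split.
Qed.


Lemma lIn_map_all (A B : Type) (f : A -> B) (P : B -> Prop) s :
  (forall y, lIn y (map f s) -> P y) <-> (forall x, lIn x s -> P (f x)).
Proof.
split=> h.
- move=> x hx; apply: h; apply/lIn_map; by exists x.
- move=> y /lIn_map [x [hx ->]]; exact: h.
Qed.

Section Pattern.
Context (S : sig) (K M V : structure S)
  (HE : forall sigma, sentence sigma -> (forall e, holds K e sigma) -> forall e, holds M e sigma)
  (F : seq (entry V)) (rK : V -> K).

Definition d0 : V := pt V.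
Definition Ps : seq V := d0 :: flatten (map (fun x : entry V => map (projT2 x).2 (enum 'I_(projT1 x))) F).

Definition idx (v : V) : nat :=
  match excluded_middle_informative (exists j, j < size Ps /\ nth d0 Ps j = v) with
  | left h => proj1_sig (constructive_indefinite_description _ h) | right _ => 0 end.

Lemma idx_lt v : idx v < size Ps.
Proof.
rewrite /idx; case: excluded_middle_informative => h //.
exact: (proj1 (proj2_sig (constructive_indefinite_description _ h))).
Qed.

Lemma idx_nth v : lIn v Ps -> nth d0 Ps (idx v) = v.
Proof.
move=> hv; rewrite /idx; case: excluded_middle_informative => h.
- exact: (proj2 (proj2_sig (constructive_indefinite_description _ h))).
- by exfalso; apply: h; apply: lIn_nth.
Qed.

Lemma param_in (x : entry V) i : lIn x F -> lIn ((projT2 x).2 i) Ps.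
Proof.
move=> hx; right; apply/lIn_flatten; exists (map (projT2 x).2 (enum 'I_(projT1 x))); split.
- apply/lIn_map; by exists x.
- apply/lIn_map; exists i; split => //; apply/lIn_mem; by rewrite mem_enum.
Qed.

Definition rho (x : entry V) : nat -> nat :=
  fun m => match m with 0 => 0 | i.+1 =>
    match (insub i : option 'I_(projT1 x)) with Some j => (idx ((projT2 x).2 j)).+1 | None => 0 end end.

Lemma rho_lt x m : rho x m < (size Ps).+1.
Proof. case: m => [|i] //=; case: insub => [j|] //; rewrite ltnS; exact: idx_lt. Qed.

Definition psi (w : seq (entry V)) : formula S :=
  Ex (andl (map (fun x : entry V => frename (rho x) (projT2 x).1) w)).

Definition sem (N : structure S) (Y : nat -> N) (w : seq (entry V)) : Prop :=
  exists v, forall x, lIn x w -> holds N (penv v (fun i => Y (idx ((projT2 x).2 i)))) (projT2 x).1.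

Lemma holds_psi (N : structure S) (Y : nat -> N) e w :
  holds N (fun m => if m < size Ps then Y m else e (m - size Ps)) (psi w) <-> sem Y w.
Proof.
have env : forall v (x : entry V),
  (fun n => scons v (fun m => if m < size Ps then Y m else e (m - size Ps)) (rho x n)) =
  penv v (fun i => Y (idx ((projT2 x).2 i))).
  move=> v x; apply: functional_extensionality => -[|m] //=; case: insub => [j|] //=; by rewrite idx_lt.
rewrite /psi /sem /=; split=> -[v hv]; exists v.
- move/holds_andl: hv; rewrite lIn_map_all => hv x hx.
  by have := hv x hx; rewrite holds_rename env.
- apply/holds_andl; rewrite lIn_map_all => x hx; rewrite holds_rename env; exact: hv x hx.
Qed.

Definition YK (m : nat) : K := rK (nth d0 Ps m).
Definition val (w : seq (entry V)) : bool := pb (sem YK w).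

Definition sigma : formula S :=
  exn (size Ps) (andl (map (fun w => if val w then psi w else Neg (psi w)) (subs F))).

Lemma sigma_sentence : sentence sigma.
Proof.
rewrite /sentence /sigma; apply: bounded_exn; rewrite add0n.
apply: bounded_andl => q /lIn_map [w [_ ->]].
have hb : bounded (size Ps) (psi w).
  rewrite /psi /=; apply: bounded_andl => r /lIn_map [x [_ ->]].
  apply: bounded_rename; exact: rho_lt.
by case: (val w).
Qed.

Lemma sigma_K e : holds K e sigma.
Proof.
rewrite /sigma holds_exn; exists YK; apply/holds_andl => q /lIn_map [w [_ ->]].
rewrite /val; case h: (pb _).
- by apply/holds_psi; apply/pbP.
- move=> /= /holds_psi /pbP; by rewrite h.
Qed.

Lemma semK_eq w : lIn w (subs F) ->
  (sem YK w <-> exists v, forall x, lIn x w -> holds K (penv v (fun i => rK ((projT2 x).2 i))) (projT2 x).1).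
Proof.
move=> hw; rewrite /sem; split=> -[v hv]; exists v => x hx; have := hv x hx;
  have -> // : (fun i => YK (idx ((projT2 x).2 i))) = (fun i => rK ((projT2 x).2 i));
  apply: functional_extensionality => i; rewrite /YK idx_nth //; apply: param_in; exact: subs_in hw hx.
Qed.

Lemma pattern_transfer : exists f : V -> M, forall w, lIn w (subs F) ->
  ((exists v : K, forall x, lIn x w -> holds K (penv v (fun i => rK ((projT2 x).2 i))) (projT2 x).1) <->
   (exists v : M, forall x, lIn x w -> holds M (penv v (fun i => f ((projT2 x).2 i))) (projT2 x).1)).
Proof.
have := HE sigma_sentence sigma_K (fun _ => pt M).
rewrite /sigma holds_exn => -[Y hY].
exists (fun v => Y (idx v)) => w hw.
rewrite -semK_eq //.
move/holds_andl: hY => hY.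
have := hY (if val w then psi w else Neg (psi w)) (proj2 (lIn_map _ _ _) (ex_intro _ w (conj hw erefl))).
rewrite /val; case h: (pb _) => hh.
- have hM := proj1 (holds_psi Y (fun _ => pt M) w) hh; split=> // _; exact/pbP.
- split; first by move/pbP; rewrite h.
  move=> hs; exfalso; apply: hh; exact: (proj2 (holds_psi Y (fun _ => pt M) w) hs).
Qed.
End Pattern.


Lemma transfer (L : Type) (D : (L -> Prop) -> Prop) (hU : ultrafilter D) (l0 : L)
  (X : L -> L -> Prop) (hX : forall i, D (X i))
  (hXf : forall t, exists s : seq L, forall i, X i t -> lIn i s)
  (Z : nat -> L -> Prop) (hZ : forall n, D (Z n))
  (hZf : forall t, exists ns : seq nat, forall n, Z n t -> lIn n ns)
  (S : sig) (hS : countable_sig S) (K M V W : structure S)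
  (HE : forall sigma, sentence sigma -> (forall e, holds K e sigma) -> forall e, holds M e sigma)
  (piK : (L -> K) -> V) (hK : losmap D K V piK) (piM : (L -> M) -> W) (hM : losmap D M W piM) :
  saturated (card_le L) W -> saturated (card_le L) V.
Proof.
case: hS => [[fe hfe] [re hre]].
move=> hW A [e he] p hp hfs.
pose e' := fun v : V => match excluded_middle_informative (A v) with
                         | left h => e (exist _ v h) | right _ => l0 end.
have he' : forall u v, A u -> A v -> e' u = e' v -> u = v.
  move=> u v hu hv; rewrite /e'.
  case: excluded_middle_informative => // hu'; case: excluded_middle_informative => // hv'.
  by move/he => [].
pose fcode := fun (k : nat) (phi : formula S) => pickle (k, fenc fe re phi).
pose Y := fun (x : entry V) t =>
  Z (fcode (projT1 x) (projT2 x).1) t /\ forall i, X (e' ((projT2 x).2 i)) t.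
have hY : forall x, D (Y x).
  move=> x; apply: (uf_and hU (hZ _)); apply: (uf_fin hU) => i; exact: hX.
have hF : forall t, exists Fl : seq (entry V), forall x, p x -> Y x t -> lIn x Fl.
  move=> t; case: (hZf t) => ns hns; case: (hXf t) => s hs.
  pose Q := map (fun l => epsilon (inhabits (pt V)) (fun v => A v /\ e' v = l)) s.
  pose dec := fun n => epsilon (inhabits (0, tru S)) (fun kp : nat * formula S => fcode kp.1 kp.2 = n).
  pose mk := fun n (tup : seq V) =>
    existT (fun k => (formula S * ('I_k -> V))%type) (dec n).1 ((dec n).2, fun i : 'I_((dec n).1) => nth (pt V) tup i).
  exists (flatten (map (fun n => map (mk n) (allk Q (dec n).1)) ns)).
  case=> k [phi a] px [hz hxa] /=.
  have hdec : dec (fcode k phi) = (k, phi).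
    have := epsilon_spec (inhabits (0, tru S)) (fun kp : nat * formula S => fcode kp.1 kp.2 = fcode k phi)
              (ex_intro _ (k, phi) erefl).
    rewrite -/(dec (fcode k phi)).
    case: (dec (fcode k phi)) => k' phi' /pickle_inj' [-> /(fenc_inj hfe hre) ->] //.
  apply/lIn_flatten; exists (map (mk (fcode k phi)) (allk Q (dec (fcode k phi)).1)); split.
  - apply/lIn_map; exists (fcode k phi); split=> //; apply: hns; exact: hz.
  - apply/lIn_map; exists (map a (enum 'I_k)); split.
    + rewrite hdec /=.
      have := allk_in (s := map a (enum 'I_k)) (Q := Q); rewrite size_map size_enum_ord; apply.
      move=> y /lIn_map [i [_ ->]]; apply/lIn_map; exists (e' (a i)); split; first by apply: hs; exact: hxa i.
      have hai : A (a i) := proj2 (hp _ px) i.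
      have := epsilon_spec (inhabits (pt V)) (fun v => A v /\ e' v = e' (a i)) (ex_intro _ (a i) (conj hai erefl)).
      move=> [h1 h2]; apply: he' => //.
    + rewrite /mk hdec /=.
      have -> // : (fun i : 'I_k => nth (pt V) (map a (enum 'I_k)) i) = a.
      apply: functional_extensionality => i; by rewrite (nth_map i) ?size_enum_ord // nth_ord_enum.
pose Ft := fun t => epsilon (inhabits [::]) (fun Fl => forall x, p x -> Y x t -> lIn x Fl).
have FtP : forall t x, p x -> Y x t -> lIn x (Ft t).
  move=> t; exact: (epsilon_spec (inhabits [::]) (fun Fl => forall x, p x -> Y x t -> lIn x Fl) (hF t)).
pose rK := fun t (v : V) => lrep piK v t.
pose Kex := fun t (w : seq (entry V)) => exists v : K, forall x, lIn x w ->
   holds K (penv v (fun i => rK t ((projT2 x).2 i))) (projT2 x).1.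
pose Mex := fun (f : V -> M) (w : seq (entry V)) => exists v : M, forall x, lIn x w ->
   holds M (penv v (fun i => f ((projT2 x).2 i))) (projT2 x).1.
pose fT := fun t => epsilon (inhabits (fun _ : V => pt M))
   (fun f => forall w, lIn w (subs (Ft t)) -> (Kex t w <-> Mex f w)).
have fTP : forall t w, lIn w (subs (Ft t)) -> (Kex t w <-> Mex (fT t) w).
  move=> t; exact: (epsilon_spec (inhabits (fun _ : V => pt M))
   (fun f => forall w, lIn w (subs (Ft t)) -> (Kex t w <-> Mex f w)) (pattern_transfer HE (Ft t) (rK t))).
pose a' := fun v t => fT t v.
pose tr := fun x : entry V => existT (fun k => (formula S * ('I_k -> W))%type) (projT1 x)
              ((projT2 x).1, fun i => piM (a' ((projT2 x).2 i))).
pose q := fun y : entry W => exists x, p x /\ y = tr x.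
pose A' := fun w : W => exists v, A v /\ w = piM (a' v).
have tq : type_over A' q.
  move=> y [x [px ->]]; split; first exact: (proj1 (hp x px)).
  move=> i /=; exists ((projT2 x).2 i); split=> //; exact: (proj2 (hp x px) i).
have cq : card_le L {w | A' w}.
  pose pick := fun w => epsilon (inhabits (pt V)) (fun v => A v /\ w = piM (a' v)).
  exists (fun w : {w | A' w} => e' (pick (proj1_sig w))).
  move=> [w1 h1] [w2 h2] /= ew.
  have s1 := epsilon_spec (inhabits (pt V)) (fun v => A v /\ w1 = piM (a' v)) h1.
  have s2 := epsilon_spec (inhabits (pt V)) (fun v => A v /\ w2 = piM (a' v)) h2.
  have ev := he' _ _ (proj1 s1) (proj1 s2) ew.
  have e12 : w1 = w2 by rewrite (proj2 s1) (proj2 s2); congr (piM (a' _)); exact: ev.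
  subst w2; f_equal; apply: proof_irrelevance.
have fq : fin_sat q.
  move=> s' hs'.
  pose dentry : entry V := existT (fun k => (formula S * ('I_k -> V))%type) 0 (tru S, fun _ => pt V).
  pose xs := map (fun y => epsilon (inhabits dentry) (fun x => p x /\ y = tr x)) s'.
  have xsP : forall x, lIn x xs -> p x.
    move=> x /lIn_map [y [hy ->]].
    exact: (proj1 (epsilon_spec (inhabits dentry) (fun x => p x /\ y = tr x) (hs' y hy))).
  have xsT : forall y, lIn y s' -> exists x, lIn x xs /\ y = tr x.
    move=> y hy; exists (epsilon (inhabits dentry) (fun x => p x /\ y = tr x)); split.
    + apply/lIn_map; by exists y.
    + exact: (proj2 (epsilon_spec (inhabits dentry) (fun x => p x /\ y = tr x) (hs' y hy))).
  case: (hfs xs xsP) => b hb.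
  have hKs : D (fun t => forall x, lIn x xs ->
       holds K (penv (lrep piK b t) (fun i => rK t ((projT2 x).2 i))) (projT2 x).1).
    apply: (uf_list hU) => x hx; have := hb x hx; by rewrite -{1}(lrepK hK b) (los_entry hK).
  have hYs : D (fun t => forall x, lIn x xs -> Y x t).
    apply: (uf_list hU) => x hx; exact: hY.
  pose cM := fun t => epsilon (carrier_inh M) (fun c => forall x, lIn x xs ->
       holds M (penv c (fun i => a' ((projT2 x).2 i) t)) (projT2 x).1).
  have hc : D (fun t => forall x, lIn x xs -> holds M (penv (cM t) (fun i => a' ((projT2 x).2 i) t)) (projT2 x).1).
    apply: (uf_mono hU (uf_and hU hKs hYs)) => t [h1 h2].
    pose w := filter (fun x => pb (lIn x xs)) (Ft t).
    have hw : lIn w (subs (Ft t)) by apply: subs_filter.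
    have : Kex t w.
      exists (lrep piK b t) => x /lIn_filter [_ /pbP hx]; exact: h1.
    move/(fTP t w hw) => [c hcw].
    have hcs : forall x, lIn x xs -> holds M (penv c (fun i => a' ((projT2 x).2 i) t)) (projT2 x).1.
      move=> x hx; apply: hcw; apply/lIn_filter; split; last exact/pbP.
      apply: FtP; [exact: xsP| exact: h2].
    exact: (epsilon_spec (carrier_inh M) (fun c => forall x, lIn x xs ->
       holds M (penv c (fun i => a' ((projT2 x).2 i) t)) (projT2 x).1) (ex_intro _ c hcs)).
  exists (piM cM) => y hy.
  case: (xsT y hy) => x [hx ->].
  rewrite /holds_entry /= (los_penv hM).
  by apply: (uf_mono hU hc) => t ht; apply: ht.
case: (hW A' cq q tq fq) => bW hbW.
pose beta := lrep piM bW.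
have hR : forall x, p x -> D (fun t => holds M (penv (beta t) (fun i => a' ((projT2 x).2 i) t)) (projT2 x).1).
  move=> x px; have := hbW (tr x) (ex_intro _ x (conj px erefl)).
  by rewrite /holds_entry /= -(lrepK hM bW) (los_penv hM).
pose wt := fun t => filter (fun x => pb (holds M (penv (beta t) (fun i => a' ((projT2 x).2 i) t)) (projT2 x).1)) (Ft t).
pose gam := fun t => epsilon (carrier_inh K) (fun v => forall x, lIn x (wt t) ->
   holds K (penv v (fun i => rK t ((projT2 x).2 i))) (projT2 x).1).
have gamP : forall t x, lIn x (wt t) -> holds K (penv (gam t) (fun i => rK t ((projT2 x).2 i))) (projT2 x).1.
  move=> t.
  have hk : Kex t (wt t).
    apply/(fTP t (wt t) (subs_filter _ _)).
    exists (beta t) => x /lIn_filter [_ /pbP h]; exact: h.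
  exact: (epsilon_spec (carrier_inh K) (fun v => forall x, lIn x (wt t) ->
   holds K (penv v (fun i => rK t ((projT2 x).2 i))) (projT2 x).1) hk).
exists (piK gam) => x px.
apply/(los_entry hK); apply: (uf_mono hU (uf_and hU (hR x px) (hY x))) => t [h1 h2].
apply: gamP; apply/lIn_filter; split; [exact: FtP| exact/pbP].
Qed.


Lemma sig_count (S S0 S1 : sig) : countable_sig S0 -> countable_sig S1 -> sig_size_le S S0 S1 -> countable_sig S.
Proof.
move=> [[f0 hf0] [r0 hr0]] [[f1 hf1] [r1 hr1]] [F hF].
pose enc := fun x : (Defs.fsym S0 + rsym S0 + (Defs.fsym S1 + rsym S1) + nat)%type =>
  match x return (nat + nat + (nat + nat) + nat)%type with
  | inl (inl (inl a)) => inl (inl (inl (f0 a)))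
  | inl (inl (inr b)) => inl (inl (inr (r0 b)))
  | inl (inr (inl a)) => inl (inr (inl (f1 a)))
  | inl (inr (inr b)) => inl (inr (inr (r1 b)))
  | inr n => inr n end.
have henc : injective enc.
  move=> [[[a|b]|[a|b]]|n] [[[a'|b']|[a'|b']]|n'] //= [] //.
  - by move/hf0 ->.
  - by move/hr0 ->.
  - by move/hf1 ->.
  - by move/hr1 ->.
  - by move ->.
split.
- exists (fun f => pickle (enc (F (inl f)))); move=> x y /= /pickle_inj' /henc /hF [] //.
- exists (fun f => pickle (enc (F (inr f)))); move=> x y /= /pickle_inj' /henc /hF [] //.
Qed.

Lemma complete_HE (S : sig) (T : formula S -> Prop) (A B : structure S) :
  complete_theory T -> models A T -> models B T ->
  forall sigma, sentence sigma -> (forall e, holds A e sigma) -> forall e, holds B e sigma.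
Proof.
move=> [_ [_ h]] mA mB sg hs hA e.
case: (h sg hs) => hh; first by apply: hh.
by exfalso; apply: (hh A mA (fun _ => pt A)); apply: hA.
Qed.

Lemma UP_models (L : Type) (D : (L -> Prop) -> Prop) (hU : ultrafilter D) (S : sig)
  (M : structure S) (T : formula S -> Prop) : models M T -> models (UP D M) T.
Proof.
move=> hm phi hphi e.
have -> : e = (fun n => upi D (urep (e n))) by apply: functional_extensionality => n; rewrite urepK.
apply/(UP_los hU); apply: (uf_mono hU (uf_T hU)) => t _; exact: hm.
Qed.

Theorem claim2p1 (Ti Tj : theory) (L : Type) :
  complete_theory (tax Ti) -> complete_theory (tax Tj) ->
  countable_sig (tsig Ti) -> countable_sig (tsig Tj) ->
  infinite_type L ->
  ~ keisler_le L Tj Ti ->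
  ~ kstar_le (card_le L) aleph1_small Tj Ti /\
  ~ kstar_le (card_le L) one_small Tj Ti.
Proof.
move=> cTi cTj csi csj hinf hnk.
have main : kstar_le (card_le L) aleph1_small Tj Ti -> False.
  move=> [S [T [I0 [I1 [cT [hsz [hi0 [hi1 hprop]]]]]]]].
  apply: hnk => D hD M0 M1 m0 m1 U0 U1 u0 u1 sat1.
  have hU : ultrafilter D := proj1 hD.
  case: hD => _ [X [hX hXf]].
  case: (cinc hinf (conj hU (ex_intro _ X (conj hX hXf)))) => Z [hZ hZf].
  have [l0 _] : exists l0 : L, True.
    apply: NNPP => h; apply: hinf; exists [::] => x; exfalso; apply: h; by exists x.
  case: cT => cT1 [[Ms hMs] cT3].
  have cT : complete_theory T by split=> //; split=> //; exists Ms.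
  case: hi0 => b01 [b02 [b03 hi0]]; case: hi1 => b11 [b12 [b13 hi1]].
  case: (hi0 Ms hMs) => K0 [iK0 mK0]; case: (hi1 Ms hMs) => K1 [iK1 mK1].
  have cS : countable_sig S := sig_count csj csi hsz.
  have mUs : models (UP D Ms) T := UP_models hU hMs.
  have sUs : saturated aleph1_small (UP D Ms) := up_aleph1 hU hZ hZf cS (UP_losmap hU Ms).
  have iN0 := interp_up hU b01 b02 b03 iK0.
  have iN1 := interp_up hU b11 b12 b13 iK1.
  case: (up_losmap hU u1) => pi1 hpi1.
  case: (up_losmap hU u0) => pi0 hpi0.
  have sN1 : saturated (card_le L) (UP D K1).
    apply: (transfer hU l0 hX hXf hZ hZf csi (complete_HE cTi mK1 m1) (UP_losmap hU K1) hpi1 sat1).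
  have sN0 := hprop (UP D Ms) mUs sUs (UP D K0) (UP D K1) iN0 iN1 sN1.
  exact: (transfer hU l0 hX hXf hZ hZf csj (complete_HE cTj m0 mK0) hpi0 (UP_losmap hU K0) sN0).
split=> // -[S [T [I0 [I1 [cT [hsz [hi0 [hi1 hprop]]]]]]]].
apply: main; exists S, T, I0, I1; do 4 (split=> //).
move=> M hM _; apply: hprop => //.
Qed.
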